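(* Let $n,N$ be positive integers. For $f,\phi\in[0,1]$ let $a_{f,\phi}=e^{i2\pi\phi}\left[1,\ e^{i2\pi f},\ \ldots,\ e^{i2\pi(n-1)f}\right]^T\in\mathbb{C}^n$, and let $\mathcal{A}=\{a_{f,\phi}: f,\phi\in[0,1]\}$ and $\mathcal{A}_N=\{a_{m/N,\phi}: m=0,\ldots,N-1,\ \phi\in[0,1]\}$. Then for every $x\in\mathbb{C}^n$, $$\left(1-\frac{2\pi n}{N}\right)\|x\|_{\mathcal{A}_N}\le\|x\|_{\mathcal{A}}\le\|x\|_{\mathcal{A}_N}.$$
   Context: For a set $\mathcal{B}\subset\mathbb{C}^n$, the atomic norm is the gauge $\|x\|_{\mathcal{B}}=\inf\{t>0: x\in t\,\operatorname{conv}(\mathcal{B})\}$. *)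

(* Defs.v *)
From HB Require Import structures.
From mathcomp Require Import all_boot all_order all_algebra.
From mathcomp Require Import complex.
From mathcomp Require Import all_classical all_reals all_analysis.
Set Implicit Arguments. Unset Strict Implicit. Unset Printing Implicit Defensive.
Import Order.TTheory GRing.Theory Num.Theory.
Local Open Scope classical_set_scope.
Local Open Scope ring_scope.
Local Open Scope complex_scope.

Section Defs.
Variables (R : realType) (n : nat).

Definition cexpi (theta : R) : R[i] := Complex (cos theta) (sin theta).

Definition conv_hull (B : set 'cV[R[i]]_n) : set 'cV[R[i]]_n :=
  [set x | exists k : nat, exists w : 'I_k -> R, exists b : 'I_k -> 'cV[R[i]]_n,
     (forall j, 0 <= w j) /\ \sum_(j < k) w j = 1 /\ (forall j, B (b j)) /\
     x = \sum_(j < k) ((w j)%:C *: b j)].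

(* atomic norm ||x||_B = inf { t > 0 : x \in t conv(B) }, valued in \bar R
   (inf of the empty set is +oo) *)
Definition atomic_norm (B : set 'cV[R[i]]_n) (x : 'cV[R[i]]_n) : \bar R :=
  ereal_inf [set (t%:E)%E | t in
     [set t : R | 0 < t /\ exists2 y, conv_hull B y & x = (t%:C) *: y]].

Definition atom (f phi : R) : 'cV[R[i]]_n :=
  \col_(j < n) (cexpi (2 * pi * phi) * cexpi (2 * pi * (j%:R * f))).

Definition atoms_cont : set 'cV[R[i]]_n :=
  [set a | exists f phi, [/\ 0 <= f <= 1, 0 <= phi <= 1 & a = atom f phi]].

Definition atoms_grid (N : nat) : set 'cV[R[i]]_n :=
  [set a | exists (m : nat) phi,
     [/\ (m < N)%N, 0 <= phi <= 1 & a = atom (m%:R / N%:R) phi]].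

End Defs.

Arguments atoms_cont {R} n.
Arguments atoms_grid {R} n N.
Arguments atom {R} n f phi.
Arguments atomic_norm {R n} B x.
Arguments conv_hull {R n} B.

(* Main.v *)
Require Import Defs.
From HB Require Import structures.
From mathcomp Require Import all_boot all_order all_algebra.
From mathcomp Require Import complex.
From mathcomp Require Import all_classical all_reals all_analysis.
From mathcomp Require Import ring lra zify.
Import Order.TTheory GRing.Theory Num.Theory.
Local Open Scope classical_set_scope.
Local Open Scope ring_scope.
Local Open Scope complex_scope.

Section Aux.
Variable R : realType.
Local Notation C := R[i].
Local Notation E := (@cexpi R).

Lemma cexpiD (x y : R) : E (x + y) = E x * E y.
Proof.
rewrite /cexpi cosD sinD; apply/eqP; rewrite eq_complex /=.
by apply/andP; split; apply/eqP; ring.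
Qed.

Lemma cexpi0 : E 0 = 1.
Proof. by rewrite /cexpi cos0 sin0. Qed.

Lemma cexpiMn (x : R) k : E (x *+ k) = E x ^+ k.
Proof.
elim: k => [|k IH]; first by rewrite mulr0n expr0 cexpi0.
by rewrite mulrS cexpiD IH exprS.
Qed.

Lemma cexpi2pi : E (2 * pi) = 1.
Proof.
by rewrite /cexpi mulr_natl cos2pi sin2pi.
Qed.

Lemma cexpi2piMn k : E ((2 * pi) *+ k) = 1.
Proof. by rewrite cexpiMn cexpi2pi expr1n. Qed.

Lemma cexpiN (x : R) : E (- x) * E x = 1.
Proof. by rewrite -cexpiD addNr cexpi0. Qed.

Lemma conj_cexpi (x : R) : (E x)^* = E (- x).
Proof. by rewrite /cexpi cosN sinN. Qed.

Lemma normc_cexpi (x : R) : Normc.normc (E x) = 1.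
Proof. by rewrite /cexpi /= cos2Dsin2 sqrtr1. Qed.

Lemma normc_Emul (x : R) (c : C) : Normc.normc (E x * c) = Normc.normc c.
Proof. by rewrite Normc.normcM normc_cexpi mul1r. Qed.

Lemma normc_ge0 (z : C) : 0 <= Normc.normc z.
Proof. by case: z => a b /=; rewrite sqrtr_ge0. Qed.

Lemma normcC (z : C) : (Normc.normc z)%:C = `|z|.
Proof. by case: z => a b; rewrite normc_def. Qed.

Lemma normc_real (r : R) : 0 <= r -> Normc.normc (r%:C) = r.
Proof.
move=> r0; rewrite /= expr0n /= addr0 sqrtr_sqr ger0_norm //.
Qed.

Lemma sqr_normcC (z : C) : ((Normc.normc z) ^+ 2)%:C = z * z^*.
Proof. by rewrite rmorphXn /= normcC sqr_normc. Qed.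

Lemma cexpi_neq1 (y : R) : 0 < `|y| < pi -> E (y *+ 2) != 1.
Proof.
move=> /andP[y0 ypi]; apply/negP => /eqP; rewrite /cexpi => -[h _].
rewrite -(mulr_natr y 2) /= in h.
have : cos (y * 2) = 1 - 2 * sin y ^+ 2.
  have -> : y * 2 = y + y by ring.
  rewrite cosD -!expr2.
  by have := cos2Dsin2 y; lra.
rewrite h => /eqP; rewrite -subr_eq0 opprB addrC subrK mulf_eq0 pnatr_eq0 /=.
rewrite expf_eq0 /=.
case: (ltrgtP y 0) => hy.
- have : 0 < sin (- y) by apply: sin_gt0_pi; rewrite oppr_gt0 hy /=; rewrite ltr0_norm // in ypi.
  by rewrite sinN oppr_gt0 => /ltr0_neq0/negbTE ->.
- by rewrite gt_eqF //; apply/sin_gt0_pi; rewrite hy /=; rewrite gtr0_norm in ypi.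
- by move: y0; rewrite hy normr0 ltxx.
Qed.


Lemma ortho (N a b : nat) : (0 < N)%N -> (a < b + N)%N -> (b < a + N)%N ->
  \sum_(m < N) E ((2 * pi * (a%:R - b%:R) / N%:R) *+ m) =
  if a == b then N%:R else 0.
Proof.
move=> N0 hab hba.
under eq_bigr do rewrite cexpiMn.
set z := E _.
case: (eqVneq a b) => [eab|nab].
  rewrite /z eab subrr mulr0 mul0r cexpi0.
  under eq_bigr do rewrite expr1n.
  by rewrite sumr_const card_ord.
have hN : (N%:R : R) != 0 by rewrite pnatr_eq0 -lt0n.
have zN : z ^+ N = 1.
  rewrite /z -cexpiMn.
  have -> : (2 * pi * (a%:R - b%:R) / N%:R) *+ N = 2 * pi * (a%:R - b%:R) :> R.
    by rewrite -mulr_natr divfK.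
  have -> : 2 * pi * (a%:R - b%:R) = (2 * pi) *+ a - (2 * pi) *+ b :> R.
    by rewrite mulrBr !mulr_natr.
  rewrite cexpiD !cexpi2piMn mul1r.
  by have := cexpiN ((2 * pi) *+ b); rewrite cexpi2piMn mulr1.
have z1 : z != 1.
  rewrite /z.
  have -> : 2 * pi * (a%:R - b%:R) / N%:R = (pi * (a%:R - b%:R) / N%:R) *+ 2 :> R.
    by rewrite -mulr_natr; ring.
  apply: cexpi_neq1.
  have pi0 := pi_gt0 R.
  have N0' : (0 : R) < N%:R by rewrite ltr0n.
  rewrite !normrM normfV (gtr0_norm pi0) (gtr0_norm N0').
  have dab : 0 < `|(a%:R - b%:R : R)| < N%:R.
    case: (ltngtP a b) => h.
    - rewrite ltr0_norm ?subr_lt0 ?ltr_nat // opprB -natrB ?(ltnW h) //.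
      apply/andP; split; first by rewrite (@ltr0n R) subn_gt0.
      by rewrite ltr_nat ltn_subLR ?(ltnW h) // addnC.
    - rewrite gtr0_norm ?subr_gt0 ?ltr_nat // -natrB ?(ltnW h) //.
      by rewrite h /= ltr_nat ltn_subLR ?(ltnW h) // addnC.
    - by rewrite h eqxx in nab.
  case/andP: dab => d0 dN.
  apply/andP; split; first by rewrite divr_gt0 // mulr_gt0.
  rewrite ltr_pdivrMr // ltr_pM2l //.
have := subrX1 z N; rewrite zN subrr => /esym/eqP.
by rewrite mulf_eq0 subr_eq0 (negbTE z1) /= => /eqP.
Qed.


Lemma sum_if_eq (L k : nat) (F : nat -> C) : (k < L)%N ->
  \sum_(i < L) (if (i : nat) == k then F i else 0) = F k.
Proof.
move=> kL; rewrite -big_mkcond /=.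
by rewrite (big_ord1_eq _ F k L) kL.
Qed.

Definition Ssum (L : nat) (s beta : R) : C :=
  \sum_(p < L) E ((p%:R - s) * beta).

Lemma parseval (N L : nat) (s theta : R) : (0 < N)%N -> (L <= N)%N ->
  \sum_(m < N) (Normc.normc (Ssum L s (theta - 2 * pi * m%:R / N%:R))) ^+ 2
  = (N * L)%:R.
Proof.
move=> N0 LN; apply: (@complexI R).
rewrite rmorph_sum /=.
under eq_bigr do rewrite sqr_normcC.
have hN : (N%:R : R) != 0 by rewrite pnatr_eq0 -lt0n.
transitivity (\sum_(m < N) \sum_(p < L) \sum_(p' < L)
   (E ((p%:R - p'%:R) * theta) *
      E ((2 * pi * (p'%:R - p%:R) / N%:R) *+ m))).
  apply: eq_bigr => m _; rewrite /Ssum rmorph_sum /= mulr_suml.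
  apply: eq_bigr => p _; rewrite mulr_sumr.
  apply: eq_bigr => p' _.
  rewrite [X in _ * X = _](_ : _ = E (- ((p'%:R - s) * (theta - 2 * pi * m%:R / N%:R)))); last exact: conj_cexpi.
  rewrite -!cexpiD; congr E.
  by rewrite -mulr_natr; ring.
rewrite exchange_big /=.
under eq_bigr do rewrite exchange_big /=.
transitivity (\sum_(p < L) \sum_(p' < L)
   (if (p' : nat) == p then (N%:R : C) else 0)).
  apply: eq_bigr => p _; apply: eq_bigr => p' _.
  rewrite -mulr_sumr ortho //; first last.
  - by rewrite ltn_addl // (leq_trans (ltn_ord _) LN).
  - by rewrite ltn_addl // (leq_trans (ltn_ord _) LN).
  case: eqP => [->|_]; last by rewrite mulr0.
  by rewrite subrr mul0r cexpi0 mul1r.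
under eq_bigr do rewrite (@sum_if_eq _ _ (fun _ => (N%:R : C))) //.
by rewrite sumr_const card_ord rmorph_nat natrM mulr_natr.
Qed.


Definition coef (N n : nat) (f : R) (m : nat) : C :=
  (((N * (N - n).+1)%:R)^-1)%:C *
  (Ssum N (N - n)%:R (2 * pi * f - 2 * pi * m%:R / N%:R) *
   Ssum (N - n).+1 0 (2 * pi * f - 2 * pi * m%:R / N%:R)).

Lemma interp (N n : nat) (f : R) (j : nat) : (0 < n)%N -> (n <= N)%N -> (j < n)%N ->
  \sum_(m < N) coef N n f m * E (2 * pi * (j%:R * (m%:R / N%:R)))
  = E (2 * pi * (j%:R * f)).
Proof.
move=> n0 nN jn.
have N0 : (0 < N)%N by apply: leq_trans nN.
have hN : (N%:R : R) != 0 by rewrite pnatr_eq0 -lt0n.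
set s := (N - n)%:R : R.
set a := (j + (N - n))%N.
set kap := (((N * (N - n).+1)%:R)^-1)%:C : C.
transitivity (kap * \sum_(m < N) \sum_(p < N) \sum_(q < (N - n).+1)
   (E (((p + q)%:R - s) * (2 * pi * f)) *
    E ((2 * pi * (a%:R - (p + q)%:R) / N%:R) *+ m))).
  rewrite mulr_sumr; apply: eq_bigr => m _; rewrite /coef -/s -/kap -mulrA.
  congr (_ * _); rewrite /Ssum -mulrA mulr_suml; apply: eq_bigr => p _.
  rewrite mulr_suml mulr_sumr; apply: eq_bigr => q _.
  rewrite mulrA.
  rewrite -!cexpiD; congr E; rewrite -mulr_natr /a /s !natrD.
  ring.
rewrite exchange_big /=.
under eq_bigr do rewrite exchange_big /=.
transitivity (kap * \sum_(p < N) \sum_(q < (N - n).+1)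
   (if a == (p + q)%N then E (((p + q)%:R - s) * (2 * pi * f)) * N%:R else 0)).
  congr (_ * _); apply: eq_bigr => p _; apply: eq_bigr => q _.
  rewrite -mulr_sumr ortho //; first last.
  - have := ltn_ord p; have := ltn_ord q; rewrite /a; lia.
  - have := ltn_ord p; have := ltn_ord q; rewrite /a; lia.
  by case: eqP => _; rewrite ?mulr0.
rewrite exchange_big /=.
transitivity (kap * \sum_(q < (N - n).+1) (E (2 * pi * (j%:R * f)) * N%:R)).
  congr (_ * _); apply: eq_bigr => q _.
  have hq : (q <= a)%N by have := ltn_ord q; rewrite /a; lia.
  have haq : (a - q < N)%N by rewrite /a; lia.
  under eq_bigr => p _ do rewrite -{1}(subnK hq) eqn_add2r eq_sym.
  rewrite (@sum_if_eq _ _ (fun p => E (((p + q)%:R - s) * (2 * pi * f)) * N%:R)) //.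
  congr (E _ * _); rewrite subnK // /a /s natrD; ring.
rewrite sumr_const card_ord /kap fmorphV rmorph_nat -mulr_natr natrM.
have hN' : (N%:R : C) != 0 by rewrite pnatr_eq0 -lt0n.
have hL' : ((N - n).+1%:R : C) != 0 by rewrite pnatr_eq0.
rewrite mul1r -mulr_natr; field; rewrite hN' andbT -(natrD _ 1); exact: hL'.
Qed.


Lemma cost (N n : nat) (f : R) : (0 < n)%N -> (n <= N)%N ->
  \sum_(m < N) Normc.normc (coef N n f m) <=
  (N + (N - n).+1)%:R / (2 * (N - n).+1%:R).
Proof.
move=> n0 nN.
have N0 : (0 < N)%N by apply: leq_trans nN.
set L := (N - n).+1.
set kap := ((N * L)%:R)^-1 : R.
have k0 : 0 <= kap by rewrite invr_ge0 ler0n.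
set S1 := fun m : 'I_N => Ssum N (N - n)%:R (2 * pi * f - 2 * pi * m%:R / N%:R).
set S2 := fun m : 'I_N => Ssum L 0 (2 * pi * f - 2 * pi * m%:R / N%:R).
apply: (@le_trans _ _ (\sum_(m < N) (kap / 2 * ((Normc.normc (S1 m)) ^+ 2 + (Normc.normc (S2 m)) ^+ 2)))).
  apply: ler_sum => m _.
  rewrite /coef Normc.normcM Normc.normcM normc_real // -/L -/kap.
  rewrite -/(S1 m) -/(S2 m) -mulrA.
  set x := Normc.normc (S1 m); set y := Normc.normc (S2 m).
  have := sqr_ge0 (x - y).
  have hk := k0.
  nra.
rewrite -mulr_sumr big_split /= /S1 /S2 !parseval //; last by rewrite /L; lia.
have hN : (N%:R : R) != 0 by rewrite pnatr_eq0 -lt0n.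
have hL : (L%:R : R) != 0 by rewrite pnatr_eq0.
rewrite /kap !natrM natrD le_eqVlt; apply/orP; left; apply/eqP.
by field; rewrite hN hL.
Qed.


Section SH.
Variable n : nat.
Local Notation V := 'cV[C]_n.

Definition SH (B : set V) (s : R) (v : V) : Prop :=
  exists k (w : 'I_k -> R) (b : 'I_k -> V),
    (forall j, 0 <= w j) /\ \sum_(j < k) w j = s /\ (forall j, B (b j)) /\
    v = \sum_(j < k) ((w j)%:C *: b j).

Lemma SH0 B : SH B 0 0.
Proof.
exists 0%N, (fun _ => 0), (fun _ => 0); split; first by [].
by rewrite !big_ord0; split => //; split => // -[].
Qed.

Lemma SH1 B b c : B b -> 0 <= c -> SH B c (c%:C *: b).
Proof.
move=> Bb c0; exists 1%N, (fun _ => c), (fun _ => b).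
by rewrite !big_ord1.
Qed.

Lemma SHD B s1 s2 v1 v2 : SH B s1 v1 -> SH B s2 v2 -> SH B (s1 + s2) (v1 + v2).
Proof.
move=> [k1 [w1 [b1 [w10 [sw1 [Bb1 ->]]]]]] [k2 [w2 [b2 [w20 [sw2 [Bb2 ->]]]]]].
exists (k1 + k2)%N.
exists (fun i => match fintype.split i with inl a => w1 a | inr a => w2 a end).
exists (fun i => match fintype.split i with inl a => b1 a | inr a => b2 a end).
have sl : forall a : 'I_k1, fintype.split (lshift k2 a) = inl a.
  by move=> a; exact: (unsplitK (inl a)).
have sr : forall a : 'I_k2, fintype.split (rshift k1 a) = inr a.
  by move=> a; exact: (unsplitK (inr a)).
split; first by move=> i; case: fintype.split.
split.
  rewrite big_split_ord /= -sw1 -sw2.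
  congr (_ + _).
  - by apply: eq_bigr => i _; rewrite sl.
  - by apply: eq_bigr => i _; rewrite sr.
split; first by move=> i; case: fintype.split.
rewrite big_split_ord /=.
congr (_ + _).
- by apply: eq_bigr => i _; rewrite sl.
- by apply: eq_bigr => i _; rewrite sr.
Qed.


Arguments SHD {B s1 s2 v1 v2}.
Arguments SH1 {B b c}.

Lemma SHZ B c s v : 0 <= c -> SH B s v -> SH B (c * s) (c%:C *: v).
Proof.
move=> c0 [k [w [b [w0 [sw [Bb ->]]]]]].
exists k, (fun j => c * w j), b; split; first by move=> j; rewrite mulr_ge0.
split; first by rewrite -mulr_sumr sw.
split => //; rewrite scaler_sumr; apply: eq_bigr => j _.
by rewrite scalerA rmorphM.
Qed.


Arguments SHZ {B c s v}.

Lemma SHsum B k (s : 'I_k -> R) (v : 'I_k -> V) :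
  (forall i, SH B (s i) (v i)) -> SH B (\sum_(i < k) s i) (\sum_(i < k) v i).
Proof.
elim: k s v => [|k IH] s v h; first by rewrite !big_ord0; exact: SH0.
rewrite !big_ord_recr /=; apply: SHD; last exact: h.
exact: (IH (fun i => s (widen_ord (leqnSn k) i)) (fun i => v (widen_ord (leqnSn k) i))).
Qed.

Lemma SHpad B b s t v : B b -> B (- b) -> s <= t -> SH B s v -> SH B t v.
Proof.
move=> Bb Bnb st hv.
have c0 : 0 <= (t - s) / 2 by rewrite divr_ge0 // subr_ge0.
have := SHD (SHD hv (SH1 Bb c0)) (SH1 Bnb c0).
have -> : v + ((t - s) / 2)%:C *: b + ((t - s) / 2)%:C *: - b = v by rewrite scalerN addrK.
by have -> : s + (t - s) / 2 + (t - s) / 2 = t by field.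
Qed.

Lemma SHgauge B s v : 0 < s -> SH B s v ->
  conv_hull B ((s^-1)%:C *: v) /\ v = s%:C *: ((s^-1)%:C *: v).
Proof.
move=> s0 hv; split.
  have hs : 0 <= s^-1 by rewrite invr_ge0 ltW.
  have := SHZ hs hv.
  by rewrite mulVf ?gt_eqF.
by rewrite scalerA -rmorphM divff ?gt_eqF // scale1r.
Qed.


End SH.
Arguments SH {n}.
Arguments SHD {n B s1 s2 v1 v2}.
Arguments SH1 {n B b c}.
Arguments SHZ {n B c s v}.
Arguments SHpad {n B b s t v}.
Arguments SHgauge {n B s v}.
Arguments SHsum {n B k s v}.


Lemma unit_phase (a b : R) : a ^+ 2 + b ^+ 2 = 1 ->
  exists2 phi, 0 <= phi <= 1 & E (2 * pi * phi) = a +i* b.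
Proof.
move=> hab.
have ha : -1 <= a <= 1 by apply/andP; split; nra.
have al0 := acos_ge0 ha.
have alpi' := acos_lepi ha.
have ca : cos (acos a) = a by apply: acosK; rewrite in_itv /=.
have sa : sin (acos a) = `|b|.
  by rewrite sin_acos // (_ : 1 - a ^+ 2 = b ^+ 2) ?sqrtr_sqr //; lra.
have pi0 := pi_gt0 R.
have pi0' : 0 <= 2 * (pi : R) by lra.
have h2pi : 2 * (pi : R) != 0 by rewrite mulf_neq0 // gt_eqF.
have := cexpi2pi; rewrite /cexpi => -[c2 s2].
case: (leP 0 b) => hb.
  exists (acos a / (2 * pi)).
    apply/andP; split; first by rewrite divr_ge0.
    rewrite ler_pdivrMr ?mulr_gt0 // mul1r; nra.
  rewrite (_ : 2 * pi * (acos a / (2 * pi)) = acos a); last by rewrite mulrC divfK.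
  by rewrite /cexpi ca sa ger0_norm.
exists (1 - acos a / (2 * pi)).
  have h1 : acos a / (2 * pi) <= 1 by rewrite ler_pdivrMr ?mulr_gt0 // mul1r; nra.
  have h0 : 0 <= acos a / (2 * pi) by rewrite divr_ge0.
  apply/andP; split; lra.
rewrite (_ : 2 * pi * (1 - acos a / (2 * pi)) = 2 * pi - acos a); last by rewrite mulrBr mulr1 [2 * pi * _]mulrC divfK.
rewrite /cexpi cosB sinB c2 s2 ca sa ltr0_norm //.
by congr (_ +i* _); ring.
Qed.

Lemma phase (z : C) : exists2 phi, 0 <= phi <= 1 & z = (Normc.normc z)%:C * E (2 * pi * phi).
Proof.
case: z => x y.
set r := Normc.normc (x +i* y).
have r0 : 0 <= r by exact: normc_ge0.
have rE : r ^+ 2 = x ^+ 2 + y ^+ 2.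
  by rewrite /r /= sqr_sqrtr // addr_ge0 // sqr_ge0.
case: (eqVneq r 0) => [rz|rnz].
  exists 0; first by rewrite lexx ler01.
  have hx : x = 0 by move: rE; rewrite rz expr0n /=; nra.
  have hy : y = 0 by move: rE; rewrite rz expr0n /=; nra.
  by rewrite rz hx hy mul0r.
have [phi hphi hE] : exists2 phi, 0 <= phi <= 1 & E (2 * pi * phi) = (x / r) +i* (y / r).
  apply: unit_phase.
  rewrite !expr_div_n -mulrDl -rE divff //.
  by rewrite expf_eq0.
exists phi => //; rewrite hE.
apply/eqP; rewrite eq_complex /=; apply/andP; split; apply/eqP.
- by field.
- by field.
Qed.


Section Atoms.
Variables n N : nat.

Lemma atom_phase (f phi : R) : atom n f phi = E (2 * pi * phi) *: atom n f 0.
Proof.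
apply/matrixP => j k; rewrite !mxE.
by rewrite mulr0 cexpi0 mul1r.
Qed.

Lemma grid_phase (z : C) (m : nat) : (m < N)%N ->
  SH (atoms_grid n N) (Normc.normc z) (z *: atom n (m%:R / N%:R) 0).
Proof.
move=> mN; have [phi hphi hz] := phase z.
have -> : z *: atom n (m%:R / N%:R) 0 = (Normc.normc z)%:C *: atom n (m%:R / N%:R) phi.
  by rewrite (atom_phase _ phi) scalerA -hz.
apply: SH1; last exact: normc_ge0.
by exists m, phi; split.
Qed.

Lemma atom_half (f : R) : atom n f (1 / 2) = - atom n f 0.
Proof.
rewrite atom_phase (_ : 2 * pi * (1 / 2) = pi :> R); last by field.
rewrite /cexpi cospi sinpi.
have -> : (-1 +i* 0) = -1 :> C by apply/eqP; rewrite eq_complex /= oppr0 !eqxx.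
by rewrite scaleN1r.
Qed.

Lemma rep (f phi : R) : (0 < n)%N -> (n <= N)%N ->
  SH (atoms_grid n N) (\sum_(m < N) Normc.normc (coef N n f m)) (atom n f phi).
Proof.
move=> n0 nN.
have -> : atom n f phi =
    \sum_(m < N) ((E (2 * pi * phi) * coef N n f m) *: atom n (m%:R / N%:R) 0).
  apply/matrixP => j k; rewrite !mxE summxE.
  under eq_bigr do rewrite !mxE mulr0 cexpi0 mul1r -mulrA.
  by rewrite -mulr_sumr interp.
have -> : \sum_(m < N) Normc.normc (coef N n f m) =
    \sum_(m < N) Normc.normc (E (2 * pi * phi) * coef N n f m).
  by apply: eq_bigr => m _; rewrite normc_Emul.
apply: SHsum => m; exact: grid_phase.
Qed.

Lemma cont_to_grid a : (0 < n)%N -> (n <= N)%N -> atoms_cont n a ->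
  SH (atoms_grid n N) ((N + (N - n).+1)%:R / (2 * (N - n).+1%:R)) a.
Proof.
move=> n0 nN [f [phi [_ hphi ->]]].
have N0 : (0 < N)%N by apply: leq_trans nN.
apply: (SHpad (b := atom n (0%:R / N%:R) 0)); last exact: rep.
- by exists 0%N, 0; split; rewrite ?lexx ?ler01.
- rewrite -atom_half; exists 0%N, (1 / 2); split => //.
  by rewrite divr_ge0 ?ler01 //= ler_pdivrMr // mul1r ler1n.
- exact: cost.
Qed.

End Atoms.

End Aux.

Arguments SH {R n}.
Arguments SHD {R n B s1 s2 v1 v2}.
Arguments SH1 {R n B b c}.
Arguments SHZ {R n B c s v}.
Arguments SHpad {R n B b s t v}.
Arguments SHgauge {R n B s v}.
Arguments SHsum {R n B k s v}.

Close Scope complex_scope.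

Theorem mainTheorem9 (R : realType) (n N : nat) (hn : (0 < n)%N) (hN : (0 < N)%N)
    (x : 'cV[R[i]]_n) :
  (((1 - 2 * pi * n%:R / N%:R)%:E * atomic_norm (atoms_grid n N) x
      <= atomic_norm (atoms_cont n) x)%E)
  /\ (atomic_norm (atoms_cont n) x <= atomic_norm (atoms_grid n N) x)%E.
Proof.
have Gge0 : forall B (v : 'cV[R[i]]_n), (0 <= atomic_norm B v)%E.
  move=> B v; apply/ereal_infP => y [t [t0 _] <-].
  by rewrite lee_fin ltW.
have pi2 := pi_ge2 R.
split.
  set eps := 1 - 2 * pi * n%:R / N%:R.
  case: (leP eps 0) => he.
    apply: le_trans (Gge0 _ _).
    by apply: mule_le0_ge0; rewrite ?lee_fin.
  have N0 : (0 : R) < N%:R by rewrite ltr0n.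
  have nN : (n <= N)%N.
    rewrite -(ler_nat R).
    have : (2 * pi * n%:R / N%:R : R) < 1 by rewrite /eps in he; lra.
    rewrite ltr_pdivrMr // mul1r => h.
    have : (0 : R) <= n%:R by rewrite ler0n.
    nra.
  set L := (N - n).+1.
  set T := ((N + L)%:R / (2 * L%:R) : R).
  have L0 : (0 : R) < L%:R by rewrite ltr0n.
  have T0 : 0 < T by rewrite /T divr_gt0 // ?ltr0n ?addn_gt0 ?hN // mulr_gt0.
  have eT : eps * T <= 1.
    rewrite /T mulrA ler_pdivrMr ?mulr_gt0 // mul1r.
    rewrite /L natrD -addn1 natrD natrB // /eps.
    set q := 2 * pi * n%:R / N%:R.
    have hq : q * N%:R = 2 * pi * n%:R by rewrite /q divfK // gt_eqF.
    have q0 : 0 <= q by rewrite /q divr_ge0 // mulr_ge0 ?ler0n // mulr_ge0 // pi_ge0.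
    have nN' : (n%:R : R) <= N%:R by rewrite ler_nat.
    have n0 : (0 : R) <= n%:R by rewrite ler0n.
    nra.
  apply/ereal_infP => y [t [t0 [yc hyc hx]] <-].
  have hSH : SH (atoms_grid n N) (t * T) x.
    rewrite hx; apply: SHZ; first exact: ltW.
    case: hyc => k [w [b [w0 [sw [Bb ->]]]]].
    rewrite -[T]mul1r -sw mulr_suml; apply: SHsum => j.
    apply: SHZ => //.
    exact: cont_to_grid.
  have [hc hxe] := SHgauge (mulr_gt0 t0 T0) hSH.
  have Gle : (atomic_norm (atoms_grid n N) x <= (t * T)%:E)%E.
    apply: ge_ereal_inf; exists (t * T)%:E => //.
    exists (t * T) => //; split; first exact: mulr_gt0.
    by exists ((t * T)^-1%:C%C *: x).
  apply: le_trans (lee_wpmul2l _ Gle) _; first by rewrite lee_fin ltW.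
  rewrite -EFinM lee_fin mulrA mulrC mulrA.
  by have := eT; nra.
apply/ereal_infP => y [t [t0 [yc hyc hx]] <-].
apply: ge_ereal_inf; exists t%:E => //; exists t => //; split => //.
exists yc => //.
case: hyc => k [w [b [w0 [sw [Bb ->]]]]].
exists k, w, b; split => //; split => //; split => // j.
have [m [phi [mN hphi ->]]] := Bb j.
exists (m%:R / N%:R), phi; split => //.
have N0 : (0 : R) < N%:R by rewrite ltr0n.
by rewrite divr_ge0 ?ler0n //= ler_pdivrMr // mul1r ler_nat ltnW.
Qed.
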